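(* The rules $\mathrm{MC}$, $\mathrm{MCC}$, $\mathrm{RA}$ and $\mathrm{FULL}_H$ are agenda separable: for each such rule $R$, every agenda $\mathcal{A}$, every independent partition $\{\mathcal{A}_1,\mathcal{A}_2\}$ of $\mathcal{A}$ and every profile $P\in\mathcal{J}_{\mathcal{A}}^n$, $R(P)=\{J^1\cup J^2 \mid J^1\in R(P\downarrow\mathcal{A}_1),\ J^2\in R(P\downarrow\mathcal{A}_2)\}$.
   Context: Fix a propositional language, a consistent formula $\Gamma$ (the integrity constraint) and a number $n\ge1$ of agents. An issue is a pair $\{\varphi,\neg\varphi\}$ with $\varphi$ neither a tautology nor a contradiction. An agenda $\mathcal{A}$ is a finite set of issues; a sub-agenda is a union of some issues of $\mathcal{A}$. A set $S$ of formulas is consistent if $S\cup\{\Gamma\}$ is satisfiable. A judgment set over $\mathcal{A}$ is a subset $J\subseteq\mathcal{A}$; it is complete if it contains $\varphi$ or $\neg\varphi$ for each issue. $\mathcal{J}_{\mathcal{A}}$ is the set of complete consistent judgment sets over $\mathcal{A}$ (likewise for sub-agendas, same $\Gamma$). A profile is $P=\langle J_1,\dots,J_n\rangle\in\mathcal{J}_{\mathcal{A}}^n$; $P\downarrow\mathcal{A}'=\langle J_1\cap\mathcal{A}',\dots,J_n\cap\mathcal{A}'\rangle$. $N(P,\varphi)=|\{i:\varphi\in J_i\}|$; $m(P)=\{\varphi\in\mathcal{A}: N(P,\varphi)>n/2\}$; $P$ is majority-consistent if $m(P)$ is consistent. $d_H(J,J')=|J\setminus J'|$, and for profiles $P=\langle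 J_i\rangle$, $Q=\langle J'_i\rangle$, $D_H(P,Q)=\sum_i d_H(J_i,J'_i)$. A partition $\{\mathcal{A}_1,\mathcal{A}_2\}$ of $\mathcal{A}$ into sub-agendas is independent if for all $J^1\in\mathcal{J}_{\mathcal{A}_1}$, $J^2\in\mathcal{J}_{\mathcal{A}_2}$, $J^1\cup J^2$ is consistent. Rules: $\mathrm{MC}(P)$ is the set of $J\in\mathcal{J}_{\mathcal{A}}$ with $J\supseteq S$ for some inclusion-maximal consistent subset $S$ of $m(P)$. $\mathrm{MCC}(P)$ is the set of $J\in\mathcal{J}_{\mathcal{A}}$ with $J\supseteq S$ for some consistent subset $S$ of $m(P)$ of maximum cardinality. $\mathrm{RA}$ (ranked agenda): writing $\mathcal{A}=\{\psi_1,\dots,\psi_{2m}\}$, for each permutation $\sigma$ such that $N(P,\psi_{\sigma(1)})\ge\dots\ge N(P,\psi_{\sigma(2m)})$, let $J_\sigma$ be obtained by starting from $S=\emptyset$ and, for $j=1,\dots,2m$, adding $\psi_{\sigma(j)}$ to $S$ if $S\cup\{\psi_{\sigma(j)}\}$ is consistent; $\mathrm{RA}(P)$ is the set of all such $J_\sigma$. $\mathrm{FULL}_H(P)$ is the set of $J\in\mathcal{J}_{\mathcal{A}}$ with $J\supseteq m(Q)$ for some majority-consistent profile $Q\in\mathcal{J}_{\mathcal{A}}^n$ minimizing $D_H(P,Q)$ among majority-consistent profiles. *)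

(* Defs.v *)
From mathcomp Require Import all_boot.
Set Implicit Arguments. Unset Strict Implicit. Unset Printing Implicit Defensive.

Inductive form (V : Type) : Type :=
| FAtom of V
| FTop | FBot
| FNeg of form V
| FAnd of form V & form V
| FOr of form V & form V
| FImp of form V & form V
| FIff of form V & form V.

Fixpoint eval (V : Type) (v : V -> bool) (f : form V) : bool :=
  match f with
  | FAtom a => v a
  | FTop => true
  | FBot => false
  | FNeg g => ~~ eval v g
  | FAnd g h => eval v g && eval v h
  | FOr g h => eval v g || eval v h
  | FImp g h => eval v g ==> eval v h
  | FIff g h => eval v g == eval v h
  end.

Definition tautology V (f : form V) : Prop := forall v, eval v f.
Definition contradiction V (f : form V) : Prop := forall v, eval v f = false.

Section Agg.
Variables (V : Type) (Gamma : form V) (n : nat) (I : finType) (phi : I -> form V).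

(* The agenda: issue i is {phi i, ~ phi i}; the agenda formula (i,true) is
   phi i and (i,false) is its negation ~ phi i. *)
Definition lit (x : I * bool) : form V :=
  if x.2 then phi x.1 else FNeg (phi x.1).

(* The issues are genuine (phi i neither tautology nor contradiction) and the
   agenda formulas are pairwise distinct (A = {psi_1,...,psi_2m}). *)
Definition agenda_ok : Prop :=
  injective lit /\
  (forall i, ~ tautology (phi i) /\ ~ contradiction (phi i)).

Definition consistent (S : {set I * bool}) : Prop :=
  exists v : V -> bool, eval v Gamma /\ forall x, x \in S -> eval v (lit x).

(* Sub-agendas are given by sets of issues; agf A' is the set of formulas. *)
Definition agf (A' : {set I}) : {set I * bool} := [set x | x.1 \in A'].

Definition JS (A' : {set I}) (J : {set I * bool}) : Prop :=
  J \subset agf A' /\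
  (forall i, i \in A' -> ((i, true) \in J) || ((i, false) \in J)) /\
  consistent J.

Definition profile := 'I_n -> {set I * bool}.

Definition is_profile (A' : {set I}) (P : profile) : Prop :=
  forall k, JS A' (P k).

Definition restrict (P : profile) (A' : {set I}) : profile :=
  fun k => P k :&: agf A'.

Definition N (P : profile) (x : I * bool) : nat := #|[set k | x \in P k]|.

Definition maj (A' : {set I}) (P : profile) : {set I * bool} :=
  [set x | (x \in agf A') && (n < 2 * N P x)].

(* A rule maps a (sub-)agenda and a profile to a set of judgment sets,
   represented by its membership predicate. *)
Definition rule := {set I} -> profile -> {set I * bool} -> Prop.

Definition MC : rule := fun A' P J =>
  JS A' J /\
  exists S : {set I * bool}, [/\ S \subset maj A' P, consistent S,
     (forall S' : {set I * bool}, S \subset S' -> S' \subset maj A' P -> consistent S' -> S' = S)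
     & S \subset J].

Definition MCC : rule := fun A' P J =>
  JS A' J /\
  exists S : {set I * bool}, [/\ S \subset maj A' P, consistent S,
     (forall S' : {set I * bool}, S' \subset maj A' P -> consistent S' -> #|S'| <= #|S|)
     & S \subset J].

Inductive greedy : {set I * bool} -> seq (I * bool) -> {set I * bool} -> Prop :=
| greedy_nil S : greedy S [::] S
| greedy_add S x s T :
    consistent (x |: S) -> greedy (x |: S) s T -> greedy S (x :: s) T
| greedy_skip S x s T :
    ~ consistent (x |: S) -> greedy S s T -> greedy S (x :: s) T.

Definition RA : rule := fun A' P J =>
  exists s : seq (I * bool),
    [/\ perm_eq s (enum (agf A')),
        sorted (fun x y => N P y <= N P x) s
      & greedy set0 s J].

Definition dH (J J' : {set I * bool}) : nat := #|J :\: J'|.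

Definition DH (P Q : profile) : nat := \sum_(k < n) dH (P k) (Q k).

Definition FULL_H : rule := fun A' P J =>
  JS A' J /\
  exists Q : profile, [/\ is_profile A' Q, consistent (maj A' Q),
     (forall Q' : profile, is_profile A' Q' -> consistent (maj A' Q') -> DH P Q <= DH P Q')
     & maj A' Q \subset J].

Definition partition2 (A1 A2 : {set I}) : Prop :=
  [/\ A1 :|: A2 = [set: I], A1 :&: A2 = set0, A1 != set0 & A2 != set0].

Definition independent (A1 A2 : {set I}) : Prop :=
  forall J1 J2 : {set I * bool}, JS A1 J1 -> JS A2 J2 -> consistent (J1 :|: J2).

Definition agenda_separable (R : rule) : Prop :=
  forall (A1 A2 : {set I}) (P : profile),
    partition2 A1 A2 -> independent A1 A2 -> is_profile [set: I] P ->
    forall J, R [set: I] P J <->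
      exists J1 J2 : {set I * bool}, [/\ R A1 (restrict P A1) J1, R A2 (restrict P A2) J2
                      & J = J1 :|: J2].

End Agg.

(* Main.v *)
Require Import Defs.
From mathcomp Require Import all_boot.
From Stdlib Require Import FunctionalExtensionality.
Set Implicit Arguments. Unset Strict Implicit. Unset Printing Implicit Defensive.

Section Sep.
Variables (V : Type) (Gamma : form V) (n : nat) (I : finType) (phi : I -> form V).
Variables (A1 A2 : {set I}).
Hypothesis HA : forall i, (i \in A2) = (i \notin A1).
Hypothesis Hind : independent Gamma phi A1 A2.
Hypothesis HG : exists v : V -> bool, eval v Gamma.

Local Notation cons := (consistent Gamma phi).
Local Notation JS := (JS Gamma phi).

Lemma agf2 x : (x \in agf A2) = (x \notin agf A1).
Proof. by rewrite /agf !inE HA. Qed.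

Lemma agfT : agf [set: I] = [set: I * bool].
Proof. by apply/setP=> x; rewrite /agf !inE. Qed.

Lemma cons_sub (S T : {set I * bool}) : S \subset T -> cons T -> cons S.
Proof. move=> /subsetP sST [v [hv hT]]; exists v; split=> // x /sST; exact: hT. Qed.

Lemma cons0 : cons set0.
Proof. case: HG => v hv; exists v; split=> // x; by rewrite inE. Qed.

Lemma extend A (S : {set I*bool}) : cons S -> S \subset agf A -> exists J, JS A J /\ S \subset J.
Proof.
move=> [v [hv hS]] sA; exists [set x in agf A | eval v (lit phi x)]; split; last first.
  by apply/subsetP=> x xS; rewrite inE (subsetP sA) // hS.
split; first by apply/subsetP=> x; rewrite inE => /andP[].
split.
  move=> i iA; rewrite !inE /agf ?inE /= iA /lit /=.
  by case: (eval v (phi i)).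
by exists v; split=> // x; rewrite inE => /andP[].
Qed.

Lemma key (S1 S2 : {set I*bool}) : S1 \subset agf A1 -> S2 \subset agf A2 -> cons S1 -> cons S2 ->
  cons (S1 :|: S2).
Proof.
move=> s1 s2 c1 c2.
have [J1 [j1 sJ1]] := extend c1 s1; have [J2 [j2 sJ2]] := extend c2 s2.
apply: cons_sub (Hind j1 j2); exact: setUSS.
Qed.

Lemma split_set (T : {set I * bool}) : T = (T :&: agf A1) :|: (T :&: agf A2).
Proof. by apply/setP=> x; rewrite !(in_setU, in_setI) agf2; case: (x \in T); case: (x \in agf A1). Qed.

Lemma restr_union (X1 X2 : {set I*bool}) : X1 \subset agf A1 -> X2 \subset agf A2 ->
  (X1 :|: X2) :&: agf A1 = X1 /\ (X1 :|: X2) :&: agf A2 = X2.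
Proof.
move=> /subsetP h1 /subsetP h2; split; apply/setP=> x; rewrite !(in_setU, in_setI);
  case: (boolP (x \in X1)) => x1; case: (boolP (x \in X2)) => x2 //=;
  try (by rewrite h1); try (by rewrite agf2 h1);
  by move: (h2 x x2); rewrite agf2 => /negPf ->.
Qed.

Lemma JS_split (J : {set I*bool}) A : JS [set: I] J -> JS A (J :&: agf A).
Proof.
move=> [_ [c k]]; split; first exact: subsetIr.
split; last by apply: cons_sub k; exact: subsetIl.
move=> i iA; rewrite !inE /agf ?inE /= iA !andbT; exact: c.
Qed.

Lemma JS_sub A (J : {set I*bool}) : JS A J -> J \subset agf A.
Proof. by case. Qed.

Lemma JS_union (J1 J2 : {set I*bool}) : JS A1 J1 -> JS A2 J2 -> JS [set: I] (J1 :|: J2).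
Proof.
move=> j1 j2; split; first by rewrite agfT subsetT.
split; last exact: Hind.
move=> i _; case: (boolP (i \in A1)) => iA.
  by case: j1 => _ [/(_ i iA) h _]; rewrite !inE; case/orP: h => ->; rewrite ?orbT.
have iA2 : i \in A2 by rewrite HA.
by case: j2 => _ [/(_ i iA2) h _]; rewrite !inE; case/orP: h => ->; rewrite ?orbT.
Qed.

Lemma N_restrict (P : profile n I) A x : x \in agf A -> N (restrict P A) x = N P x.
Proof. by move=> hx; rewrite /N /restrict; apply: eq_card => k; rewrite !inE; move: hx; rewrite /agf inE => ->; rewrite andbT. Qed.

Lemma maj_restrict (P : profile n I) A : maj A (restrict P A) = maj [set: I] P :&: agf A.
Proof.
apply/setP=> x; rewrite /maj !inE.
case hx: (x \in agf A); last by move: hx; rewrite /agf inE => ->; rewrite andbF.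
rewrite N_restrict //; move: hx; rewrite /agf inE => ->; by rewrite andbT.
Qed.

Lemma maj_split (P : profile n I) : maj [set: I] P = maj A1 (restrict P A1) :|: maj A2 (restrict P A2).
Proof. by rewrite !maj_restrict -split_set. Qed.


Local Notation greedy := (greedy Gamma phi).
Definition a1 := fun x : I * bool => x \in agf A1.
Definition a2 := fun x : I * bool => x \in agf A2.

Lemma a1E x : a1 x = (x \in agf A1). Proof. by []. Qed.
Lemma a2E x : a2 x = (x \in agf A2). Proof. by []. Qed.

Lemma greedy_nil_inv S T : greedy S [::] T -> T = S.
Proof. by move=> h; inversion h. Qed.

Lemma greedy_cons_inv S x s T : greedy S (x :: s) T ->
  (cons (x |: S) /\ greedy (x |: S) s T) \/ (~ cons (x |: S) /\ greedy S s T).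
Proof. move=> h; inversion h; subst; [left|right]; by split. Qed.

Lemma G1 T s (J : {set I * bool}) : greedy T s J -> forall S1 S2, T = S1 :|: S2 ->
  S1 \subset agf A1 -> S2 \subset agf A2 -> cons S1 -> cons S2 ->
  exists J1 J2, [/\ greedy S1 (filter a1 s) J1, greedy S2 (filter a2 s) J2 & J = J1 :|: J2].
Proof.
elim=> {T s J}.
- move=> S S1 S2 -> *; exists S1, S2; split=> //; exact: greedy_nil.
- move=> S x s T hc hg IH S1 S2 eS s1 s2 c1 c2.
  case: (boolP (x \in agf A1)) => xa.
  + have xa2 : (x \in agf A2) = false by rewrite agf2 xa.
    have c1' : cons (x |: S1) by apply: cons_sub hc; rewrite eS setUA subsetUl.
    have e1 : x |: S = (x |: S1) :|: S2 by rewrite eS setUA.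
    have s1' : x |: S1 \subset agf A1 by rewrite subUset sub1set xa.
    have [J1 [J2 [g1 g2 ->]]] := IH (x |: S1) S2 e1 s1' s2 c1' c2.
    exists J1, J2; split=> //; rewrite /= ?a1E ?a2E ?xa ?xa2 /= //; exact: greedy_add.
  + have xa2 : (x \in agf A2) by rewrite agf2.
    have c2' : cons (x |: S2) by apply: cons_sub hc; rewrite eS setUCA subsetUr.
    have e1 : x |: S = S1 :|: (x |: S2) by rewrite eS setUCA.
    have s2' : x |: S2 \subset agf A2 by rewrite subUset sub1set xa2.
    have [J1 [J2 [g1 g2 ->]]] := IH S1 (x |: S2) e1 s1 s2' c1 c2'.
    exists J1, J2; split=> //; rewrite /= ?a1E ?a2E ?xa2 ?(negPf xa) /= //; exact: greedy_add.
- move=> S x s T hc hg IH S1 S2 eS s1 s2 c1 c2.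
  have [J1 [J2 [g1 g2 ->]]] := IH S1 S2 eS s1 s2 c1 c2.
  exists J1, J2; split=> //.
  case: (boolP (x \in agf A1)) => xa.
  + rewrite /= a1E xa; apply: greedy_skip g1 => c.
    apply: hc; rewrite eS setUA; apply: key => //; by rewrite subUset sub1set xa.
  + rewrite /= a1E (negPf xa) //.
  case: (boolP (x \in agf A1)) => xa.
  + rewrite /= a2E agf2 xa //.
  + have xa2 : (x \in agf A2) by rewrite agf2.
    rewrite /= a2E xa2; apply: greedy_skip g2 => c.
    apply: hc; rewrite eS setUCA; apply: key => //; by rewrite subUset sub1set xa2.
Qed.

Lemma G2 s : forall S1 S2 J1 J2 : {set I * bool}, S1 \subset agf A1 -> S2 \subset agf A2 -> cons S1 -> cons S2 ->
  greedy S1 (filter a1 s) J1 -> greedy S2 (filter a2 s) J2 -> greedy (S1 :|: S2) s (J1 :|: J2).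
Proof.
elim: s => [|x s IH] S1 S2 J1 J2 s1 s2 c1 c2 /=.
  by move=> /greedy_nil_inv -> /greedy_nil_inv ->; apply: greedy_nil.
rewrite a1E a2E agf2.
case: (boolP (x \in agf A1)) => xa /= g1 g2.
- case: (greedy_cons_inv g1) => [[c g]|[c g]].
  + apply: greedy_add; first by rewrite setUA; apply: key => //; rewrite subUset sub1set xa.
    rewrite setUA; apply: IH g g2 => //; by rewrite subUset sub1set xa.
  + apply: greedy_skip; last exact: IH g g2.
    by move=> c'; apply: c; apply: cons_sub c'; rewrite setUA subsetUl.
- have xa2 : (x \in agf A2) by rewrite agf2.
  case: (greedy_cons_inv g2) => [[c g]|[c g]].
  + apply: greedy_add; first by rewrite setUCA; apply: key => //; rewrite subUset sub1set xa2.
    rewrite setUCA; apply: IH g1 g => //; by rewrite subUset sub1set xa2.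
  + apply: greedy_skip; last exact: IH g1 g.
    by move=> c'; apply: c; apply: cons_sub c'; rewrite setUCA subsetUr.
Qed.


Lemma cardsplit (T : {set I * bool}) : #|T| = #|T :&: agf A1| + #|T :&: agf A2|.
Proof.
rewrite -(cardsID (agf A1) T); congr (_ + _); apply: eq_card => x.
by rewrite !(in_setD, in_setI) agf2 andbC.
Qed.

Variable P : profile n I.

Lemma MC_fwd J : MC Gamma phi [set: I] P J -> MC Gamma phi A1 (restrict P A1) (J :&: agf A1).
Proof.
move=> [jJ [S [sM cS mS sJ]]]; split; first exact: JS_split.
exists (S :&: agf A1); split.
- by rewrite maj_restrict setSI.
- by apply: cons_sub cS; apply: subsetIl.
- move=> S' h1 h2 c'.
  have sub' : S' \subset agf A1.
    by apply: subset_trans h2 _; rewrite maj_restrict subsetIr.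
  have e := mS (S' :|: S :&: agf A2).
  have [r _] := restr_union sub' (subsetIr S (agf A2)).
  rewrite -r e //.
  + by rewrite {1}(split_set S) setUSS.
  + by rewrite maj_split setUSS // maj_restrict setSI.
  + apply: key => //; first exact: subsetIr.
    by apply: cons_sub cS; apply: subsetIl.
- by rewrite setSI.
Qed.

Lemma MC_bwd J1 J2 : MC Gamma phi A1 (restrict P A1) J1 -> MC Gamma phi A2 (restrict P A2) J2 ->
  MC Gamma phi [set: I] P (J1 :|: J2).
Proof.
move=> [j1 [S1 [m1 c1 x1 t1]]] [j2 [S2 [m2 c2 x2 t2]]]; split; first exact: JS_union.
have a1S : S1 \subset agf A1 by apply: subset_trans m1 _; rewrite maj_restrict subsetIr.
have a2S : S2 \subset agf A2 by apply: subset_trans m2 _; rewrite maj_restrict subsetIr.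
exists (S1 :|: S2); split.
- by rewrite maj_split setUSS.
- exact: key.
- move=> S' h h2 c'.
  have e1 : S' :&: agf A1 = S1.
    apply: x1.
    + by rewrite subsetI a1S andbT; apply: subset_trans h; apply: subsetUl.
    + by rewrite maj_restrict setSI.
    + by apply: cons_sub c'; apply: subsetIl.
  have e2 : S' :&: agf A2 = S2.
    apply: x2.
    + by rewrite subsetI a2S andbT; apply: subset_trans h; apply: subsetUr.
    + by rewrite maj_restrict setSI.
    + by apply: cons_sub c'; apply: subsetIl.
  by rewrite (split_set S') e1 e2.
- exact: setUSS.
Qed.

Lemma MCC_fwd J : MCC Gamma phi [set: I] P J -> MCC Gamma phi A1 (restrict P A1) (J :&: agf A1).
Proof.
move=> [jJ [S [sM cS mS sJ]]]; split; first exact: JS_split.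
exists (S :&: agf A1); split.
- by rewrite maj_restrict setSI.
- by apply: cons_sub cS; apply: subsetIl.
- move=> S' h2 c'.
  have sub' : S' \subset agf A1.
    by apply: subset_trans h2 _; rewrite maj_restrict subsetIr.
  have := mS (S' :|: S :&: agf A2).
  have [r1 r2] := restr_union sub' (subsetIr S (agf A2)).
  rewrite (cardsplit (S' :|: _)) r1 r2 (cardsplit S) leq_add2r; apply.
  + by rewrite maj_split setUSS // maj_restrict setSI.
  + apply: key => //; first exact: subsetIr.
    by apply: cons_sub cS; apply: subsetIl.
- by rewrite setSI.
Qed.

Lemma MCC_bwd J1 J2 : MCC Gamma phi A1 (restrict P A1) J1 -> MCC Gamma phi A2 (restrict P A2) J2 ->
  MCC Gamma phi [set: I] P (J1 :|: J2).
Proof.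
move=> [j1 [S1 [m1 c1 x1 t1]]] [j2 [S2 [m2 c2 x2 t2]]]; split; first exact: JS_union.
have a1S : S1 \subset agf A1 by apply: subset_trans m1 _; rewrite maj_restrict subsetIr.
have a2S : S2 \subset agf A2 by apply: subset_trans m2 _; rewrite maj_restrict subsetIr.
exists (S1 :|: S2); split.
- by rewrite maj_split setUSS.
- exact: key.
- move=> S' h2 c'.
  have [r1 r2] := restr_union a1S a2S.
  rewrite (cardsplit S') (cardsplit (S1 :|: S2)) r1 r2; apply: leq_add.
  + apply: x1; first by rewrite maj_restrict setSI.
    by apply: cons_sub c'; apply: subsetIl.
  + apply: x2; first by rewrite maj_restrict setSI.
    by apply: cons_sub c'; apply: subsetIl.
- exact: setUSS.
Qed.


Lemma setDI3 (X Y Z : {set I * bool}) : (X :&: Z) :\: (Y :&: Z) = (X :\: Y) :&: Z.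
Proof.
apply/setP=> x; rewrite !(in_setD, in_setI).
by case: (x \in X); case: (x \in Y); case: (x \in Z).
Qed.

Lemma DH_split (Q : profile n I) :
  DH P Q = DH (restrict P A1) (restrict Q A1) + DH (restrict P A2) (restrict Q A2).
Proof.
rewrite /DH -big_split; apply: eq_bigr => k _.
rewrite /dH /restrict !setDI3; exact: cardsplit.
Qed.

Definition comb (Q1 Q2 : profile n I) : profile n I := fun k => Q1 k :|: Q2 k.

Lemma comb_prof Q1 Q2 : is_profile Gamma phi A1 Q1 -> is_profile Gamma phi A2 Q2 ->
  is_profile Gamma phi [set: I] (comb Q1 Q2).
Proof. by move=> h1 h2 k; apply: JS_union. Qed.

Lemma restr_comb Q1 Q2 : is_profile Gamma phi A1 Q1 -> is_profile Gamma phi A2 Q2 ->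
  restrict (comb Q1 Q2) A1 = Q1 /\ restrict (comb Q1 Q2) A2 = Q2.
Proof.
move=> h1 h2; split; apply: functional_extensionality => k;
have [r1 r2] := restr_union (JS_sub (h1 k)) (JS_sub (h2 k)); by [].
Qed.

Lemma prof_restr (Q : profile n I) A : is_profile Gamma phi [set: I] Q ->
  is_profile Gamma phi A (restrict Q A).
Proof. by move=> h k; apply: JS_split. Qed.

Lemma cons_maj (Q : profile n I) :
  cons (maj [set: I] Q) <-> cons (maj A1 (restrict Q A1)) /\ cons (maj A2 (restrict Q A2)).
Proof.
split.
- by move=> c; split; apply: cons_sub c; rewrite maj_restrict subsetIl.
- move=> [c1 c2]; rewrite maj_split; apply: key => //; by rewrite maj_restrict subsetIr.
Qed.

Lemma FULL_fwd J : FULL_H Gamma phi [set: I] P J ->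
  FULL_H Gamma phi A1 (restrict P A1) (J :&: agf A1).
Proof.
move=> [jJ [Q [pQ cQ mQ sJ]]]; split; first exact: JS_split.
exists (restrict Q A1); split.
- exact: prof_restr.
- by case: (cons_maj Q) => /(_ cQ) [].
- move=> Q1' p1 c1.
  have p2 := prof_restr A2 pQ.
  have [r1 r2] := restr_comb p1 p2.
  have := mQ (comb Q1' (restrict Q A2)) (comb_prof p1 p2).
  rewrite (DH_split Q) (DH_split (comb _ _)) r1 r2 leq_add2r; apply.
  apply/cons_maj; rewrite r1 r2; split=> //.
  by case: (cons_maj Q) => /(_ cQ) [].
- by rewrite maj_restrict setSI.
Qed.

Lemma FULL_bwd J1 J2 : FULL_H Gamma phi A1 (restrict P A1) J1 ->
  FULL_H Gamma phi A2 (restrict P A2) J2 -> FULL_H Gamma phi [set: I] P (J1 :|: J2).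
Proof.
move=> [j1 [Q1 [p1 c1 m1 s1]]] [j2 [Q2 [p2 c2 m2 s2]]]; split; first exact: JS_union.
have [r1 r2] := restr_comb p1 p2.
exists (comb Q1 Q2); split.
- exact: comb_prof.
- by apply/cons_maj; rewrite r1 r2.
- move=> Q' p' c'; rewrite (DH_split (comb _ _)) (DH_split Q') r1 r2.
  case: (cons_maj Q') => /(_ c') [c1' c2'] _.
  by apply: leq_add; [apply: m1 | apply: m2] => //; apply: prof_restr.
- by rewrite maj_split r1 r2 setUSS.
Qed.

Definition leP := fun x y : I * bool => N P y <= N P x.

Lemma leP_trans : transitive leP.
Proof. by move=> y x z h1 h2; rewrite /leP; exact: leq_trans h2 h1. Qed.

Lemma leP_total : total leP.
Proof. by move=> x y; rewrite /leP leq_total. Qed.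

Lemma sorted_restr A s : all (fun x => x \in agf A) s ->
  sorted (fun x y => N (restrict P A) y <= N (restrict P A) x) s = sorted leP s.
Proof.
apply: eq_in_sorted => x y hx hy; by rewrite /leP !N_restrict.
Qed.

Lemma RA_part A s J : perm_eq s (enum (agf [set: I])) -> sorted leP s ->
  greedy set0 (filter (fun x => x \in agf A) s) J -> RA Gamma phi A (restrict P A) J.
Proof.
move=> ps ss gs; exists (filter (fun x => x \in agf A) s); split=> //.
- apply: uniq_perm; first by rewrite filter_uniq // (perm_uniq ps) enum_uniq.
    exact: enum_uniq.
  by move=> x; rewrite mem_filter (perm_mem ps) !mem_enum agfT in_setT andbT.
- rewrite sorted_restr ?filter_all //; exact: sorted_filter leP_trans _ _ ss.
Qed.

Lemma RA_fwd J : RA Gamma phi [set: I] P J -> exists J1 J2,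
  [/\ RA Gamma phi A1 (restrict P A1) J1, RA Gamma phi A2 (restrict P A2) J2 & J = J1 :|: J2].
Proof.
move=> [s [ps ss gs]].
have [J1 [J2 [g1 g2 ->]]] := G1 gs (esym (setU0 set0)) (sub0set _) (sub0set _) cons0 cons0.
exists J1, J2; split=> //; exact: RA_part g1 || exact: RA_part g2.
Qed.

Lemma RA_bwd J1 J2 : RA Gamma phi A1 (restrict P A1) J1 -> RA Gamma phi A2 (restrict P A2) J2 ->
  RA Gamma phi [set: I] P (J1 :|: J2).
Proof.
move=> [s1 [p1 so1 g1]] [s2 [p2 so2 g2]].
have al1 : all (fun x => x \in agf A1) s1.
  by apply/allP=> x; rewrite (perm_mem p1) mem_enum.
have al2 : all (fun x => x \in agf A2) s2.
  by apply/allP=> x; rewrite (perm_mem p2) mem_enum.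
rewrite sorted_restr // in so1; rewrite sorted_restr // in so2.
exists (sort leP (s1 ++ s2)); split.
- apply: uniq_perm; last 2 first.
  + exact: enum_uniq.
  + move=> x; rewrite mem_sort mem_cat (perm_mem p1) (perm_mem p2) !mem_enum agfT in_setT.
    by rewrite agf2 orbN.
  rewrite sort_uniq cat_uniq (perm_uniq p1) (perm_uniq p2) !enum_uniq /= andbT.
  apply/hasPn => x xs2; rewrite /= (perm_mem p1) mem_enum.
  by move/allP: al2 => /(_ x xs2); rewrite agf2.
- exact: sort_sorted leP_total _.
- rewrite -(setU0 set0); apply: G2; rewrite ?sub0set //; try exact: cons0.
  + rewrite filter_sort ?filter_cat; [|exact: leP_total|exact: leP_trans].
    rewrite (all_filterP al1).
    have -> : filter a1 s2 = [::].
      rewrite (@eq_in_filter _ _ pred0) ?filter_pred0 // => x xs2.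
      by move/allP: al2 => /(_ x xs2); rewrite a1E agf2 => /negPf.
    by rewrite cats0 sorted_sort //; exact: leP_trans.
  + rewrite filter_sort ?filter_cat; [|exact: leP_total|exact: leP_trans].
    rewrite (all_filterP al2).
    have -> : filter a2 s1 = [::].
      rewrite (@eq_in_filter _ _ pred0) ?filter_pred0 // => x xs1.
      by move/allP: al1 => /(_ x xs1); rewrite a2E agf2 => ->.
    by rewrite sorted_sort //; exact: leP_trans.
Qed.

End Sep.

Theorem proposition3 (V : Type) (Gamma : form V) (n : nat) (I : finType)
    (phi : I -> form V) :
  (exists v : V -> bool, eval v Gamma) -> 0 < n -> agenda_ok phi ->
  [/\ @agenda_separable V Gamma n I phi (@MC V Gamma n I phi),
      @agenda_separable V Gamma n I phi (@MCC V Gamma n I phi),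
      @agenda_separable V Gamma n I phi (@RA V Gamma n I phi)
    & @agenda_separable V Gamma n I phi (@FULL_H V Gamma n I phi)].
Proof.
move=> HG _ _.
have prep : forall A1 A2 : {set I}, partition2 A1 A2 ->
    (forall i, (i \in A2) = (i \notin A1)) /\ (forall i, (i \in A1) = (i \notin A2)).
  move=> A1 A2 [hU hI _ _]; split=> i;
  (have h1 : i \in A1 :|: A2 by rewrite hU inE);
  (have h2 : i \notin A1 :&: A2 by rewrite hI inE);
  move: h1 h2; rewrite !inE; by case: (i \in A1); case: (i \in A2).
have swap : forall A1 A2 : {set I}, independent Gamma phi A1 A2 -> independent Gamma phi A2 A1.
  by move=> A1 A2 h J1 J2 h1 h2; rewrite setUC; apply: h.
split=> A1 A2 P hp hind hP J; have [HA HA'] := prep _ _ hp; have hind' := swap _ _ hind.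
- split.
  + move=> h; exists (J :&: agf A1), (J :&: agf A2); split.
    * exact: (MC_fwd HA hind h).
    * exact: (MC_fwd HA' hind' h).
    * exact: split_set HA J.
  + by move=> [J1 [J2 [h1 h2 ->]]]; exact: (MC_bwd HA hind h1 h2).
- split.
  + move=> h; exists (J :&: agf A1), (J :&: agf A2); split.
    * exact: (MCC_fwd HA hind h).
    * exact: (MCC_fwd HA' hind' h).
    * exact: split_set HA J.
  + by move=> [J1 [J2 [h1 h2 ->]]]; exact: (MCC_bwd HA hind h1 h2).
- split.
  + by move=> h; exact: (RA_fwd HA hind HG h).
  + by move=> [J1 [J2 [h1 h2 ->]]]; exact: (RA_bwd HA hind HG h1 h2).
- split.
  + move=> h; exists (J :&: agf A1), (J :&: agf A2); split.
    * exact: (FULL_fwd HA hind h).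
    * exact: (FULL_fwd HA' hind' h).
    * exact: split_set HA J.
  + by move=> [J1 [J2 [h1 h2 ->]]]; exact: (FULL_bwd HA hind h1 h2).
Qed.
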